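(* Let $n\ge 1$ and $a=(a_0,\dots,a_n)\in\mathbb{R}^{n+1}$. Then the tropical entropy satisfies $H(a)\le 1-1/n$.
   Context: For an integer $s\ge 0$, let $D_s\subset\mathbb{R}^s$ be the set of vectors $z=(z_1,\dots,z_s)$ satisfying $a$, i.e. such that for every $k$ with $0\le k\le s-1-n$ the minimum $\min_{0\le i\le n}\{a_i+z_{k+1+i}\}$ is attained for at least two different indices $i$. $D_s$ is a polyhedral complex; let $d_s=\dim D_s$. The sequence $d_s$ is subadditive, and the tropical entropy of $a$ is $H(a)=\lim_{s\to\infty} d_s/s$. *)

(* Defs.v *)
From HB Require Import structures.
From mathcomp Require Import all_boot all_order all_algebra.
From mathcomp Require Import all_classical all_reals all_analysis.
Set Implicit Arguments. Unset Strict Implicit. Unset Printing Implicit Defensive.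
Import Order.TTheory GRing.Theory Num.Theory.
Local Open Scope ring_scope.

(* a = (a_0,...,a_n) is a : 'I_n.+1 -> R.  Vectors z in R^s are 'rV[R]_s,
   with 0-based coordinates: z_{k+1+i} (1-based, paper) = z 0 (k+i) here. *)

Definition zc (R : realType) (s : nat) (z : 'rV[R]_s) (m : nat) : R :=
  oapp (fun i : 'I_s => z ord0 i) 0 (insub m).

Definition satisfies (R : realType) (n : nat) (a : 'I_n.+1 -> R) (s : nat)
  (z : 'rV[R]_s) : Prop :=
  forall k : nat, (k + n < s)%N ->
    exists i j : 'I_n.+1, i != j /\
      (forall l : 'I_n.+1,
         a i + zc z (k + i) <= a l + zc z (k + l) /\
         a j + zc z (k + j) <= a l + zc z (k + l)).

Definition Dset (R : realType) (n : nat) (a : 'I_n.+1 -> R) (s : nat)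
  : set 'rV[R]_s := [set z | satisfies a z].

Definition has_simplex (R : realType) (s : nat) (D : set 'rV[R]_s) (k : nat)
  : Prop :=
  exists p : 'I_k.+1 -> 'rV[R]_s,
    row_free (\matrix_(i < k) (p (lift ord0 i) - p ord0)) /\
    (forall w : 'I_k.+1 -> R, (forall i, 0 <= w i) -> \sum_i w i = 1 ->
       D (\sum_i w i *: p i)).

(* Dimension of a (nonempty) finite union of polyhedra in R^s, e.g. the
   polyhedral complex D_s: the largest k such that it contains a
   k-dimensional simplex (= the maximal dimension of its cells). *)
Definition pdim (R : realType) (s : nat) (D : set 'rV[R]_s) : nat :=
  \max_(k < s.+1 | `[< has_simplex D k >]) k.

Definition dseq (R : realType) (n : nat) (a : 'I_n.+1 -> R) (s : nat) : nat :=
  pdim (@Dset R n a s).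

(* Main.v *)
Require Import Defs.
From HB Require Import structures.
From mathcomp Require Import all_boot all_order all_algebra.
From mathcomp Require Import all_classical all_reals all_analysis.
From mathcomp Require Import zify.
Import Order.TTheory GRing.Theory Num.Theory.
Import numFieldNormedType.Exports.
Local Open Scope classical_set_scope.
Local Open Scope ring_scope.
From mathcomp Require Import ring lra.
Section PartB.
Variable R : realType.

Lemma pdim_le_s s (D : set 'rV[R]_s) : (pdim D <= s)%N.
Proof. by apply/bigmax_leqP => i _; rewrite -ltnS. Qed.

Lemma pdim_ge s (D : set 'rV[R]_s) r : (r <= s)%N -> has_simplex D r -> (r <= pdim D)%N.
Proof.
move=> rs h; rewrite -ltnS in rs.
exact: (@leq_bigmax_cond _ (fun k : 'I_s.+1 => `[< has_simplex D k >]) (fun k => nat_of_ord k) (Ordinal rs) (asboolT h)).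
Qed.

Lemma pdim_leP s (D : set 'rV[R]_s) B :
  (forall k, (k <= s)%N -> has_simplex D k -> (k <= B)%N) -> (pdim D <= B)%N.
Proof. by move=> H; apply/bigmax_leqP => i /asboolP h; apply: H => //; rewrite -ltnS. Qed.

Lemma zcE s (z : 'rV[R]_s) m (h : (m < s)%N) : zc z m = z ord0 (Ordinal h).
Proof. by rewrite /zc insubT. Qed.

Lemma zc_out s (z : 'rV[R]_s) m : (s <= m)%N -> zc z m = 0.
Proof. by move=> h; rewrite /zc insubF // ltnNge h. Qed.

Lemma zc_lin s k (w : 'I_k -> R) (p : 'I_k -> 'rV[R]_s) m :
  zc (\sum_i w i *: p i) m = \sum_i w i * zc (p i) m.
Proof.
case: (ltnP m s) => h.
  rewrite !(zcE _ _ _ h) summxE; apply: eq_bigr => i _; by rewrite mxE (zcE _ _ _ h).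
by rewrite zc_out // big1 // => i _; rewrite zc_out // mulr0.
Qed.

Lemma zcB s (u v : 'rV[R]_s) m : zc (u - v) m = zc u m - zc v m.
Proof.
case: (ltnP m s) => h; first by rewrite !(zcE _ _ _ h) !mxE.
by rewrite !zc_out // subr0.
Qed.

Lemma zc_lsub s t (z : 'rV[R]_(s + t)) m : (m < s)%N -> zc (lsubmx z) m = zc z m.
Proof.
move=> h; have h' : (m < s + t)%N by apply: ltn_addr.
rewrite (zcE _ _ _ h) (zcE _ _ _ h') mxE; congr (z _ _); exact: val_inj.
Qed.

Lemma zc_rsub s t (z : 'rV[R]_(s + t)) m : (m < t)%N -> zc (rsubmx z) m = zc z (s + m).
Proof.
move=> h; have h' : (s + m < s + t)%N by rewrite ltn_add2l.
rewrite (zcE _ _ _ h) (zcE _ _ _ h') mxE; congr (z _ _); exact: val_inj.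
Qed.

Variables (n : nat) (a : 'I_n.+1 -> R).

Lemma sat_l s t (z : 'rV[R]_(s + t)) : satisfies a z -> satisfies a (lsubmx z).
Proof.
move=> H k hk; have hk' : (k + n < s + t)%N by lia.
have [i [j [ij Hl]]] := H k hk'; exists i, j; split => // l.
have := ltn_ord i; have := ltn_ord j; have := ltn_ord l => ??? .
by rewrite !zc_lsub; [apply: Hl | lia ..].
Qed.

Lemma sat_r s t (z : 'rV[R]_(s + t)) : satisfies a z -> satisfies a (rsubmx z).
Proof.
move=> H k hk; have hk' : (s + k + n < s + t)%N by lia.
have [i [j [ij Hl]]] := H _ hk'; exists i, j; split => // l.
have := ltn_ord i; have := ltn_ord j; have := ltn_ord l => ??? .
by rewrite !zc_rsub ?addnA; [apply: Hl | lia ..].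
Qed.

Lemma extract s k (D : set 'rV[R]_s) (q : 'I_k.+1 -> 'rV[R]_s) :
  (forall w : 'I_k.+1 -> R, (forall i, 0 <= w i) -> \sum_i w i = 1 ->
       D (\sum_i w i *: q i)) ->
  has_simplex D (\rank (\matrix_(i < k) (q (lift ord0 i) - q ord0))).
Proof.
set M := \matrix_(i < k) (q (lift ord0 i) - q ord0) => HD.
set f := maxrankfun M.
pose p' (i : 'I_(\rank M).+1) :=
  if unlift ord0 i is Some j then q (lift ord0 (f j)) else q ord0.
exists p'; split.
  have -> : \matrix_(i < \rank M) (p' (lift ord0 i) - p' ord0) = rowsub f M.
    by apply/matrixP => i j; rewrite !mxE /p' liftK unlift_none.
  exact: maxrowsub_free.
move=> w w0 w1.
pose w2 (i : 'I_k.+1) := if unlift ord0 i is Some j then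
   \sum_(l < \rank M | f l == j) w (lift ord0 l) else w ord0.
have e1 : \sum_(l < \rank M) w (lift ord0 l) = \sum_(j < k) w2 (lift ord0 j).
  rewrite (partition_big f predT) //; apply: eq_bigr => j _.
  by rewrite /w2 liftK.
have -> : \sum_i w i *: p' i = \sum_i w2 i *: q i.
  rewrite !big_ord_recl /p' /w2 /= !unlift_none; congr (_ + _).
  under eq_bigr do rewrite liftK.
  under [RHS]eq_bigr do rewrite liftK.
  rewrite (partition_big f predT) //; apply: eq_bigr => j _.
  by rewrite scaler_suml; apply: eq_bigr => l /eqP <-.
apply: HD.
  move=> i; rewrite /w2; case: (unlift _ _) => [j|] //.
  by apply: sumr_ge0 => l _.
rewrite big_ord_recl -e1 {1}/w2 unlift_none -w1 [RHS]big_ord_recl //.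
Qed.

Lemma rank_rowmx s t k (M : 'M[R]_(k, s + t)) :
  (\rank M <= \rank (lsubmx M) + \rank (rsubmx M))%N.
Proof.
rewrite -{1}(hsubmxK M) -mxrank_tr tr_row_mx -addsmxE.
by rewrite -(mxrank_tr (lsubmx M)) -(mxrank_tr (rsubmx M)) (mxrank_adds_leqif _ _).1.
Qed.

Lemma lsub_sum s t k (w : 'I_k -> R) (p : 'I_k -> 'rV[R]_(s + t)) :
  lsubmx (\sum_i w i *: p i) = \sum_i w i *: lsubmx (p i).
Proof.
apply/matrixP => x y; rewrite !mxE !summxE; apply: eq_bigr => i _; by rewrite !mxE.
Qed.

Lemma rsub_sum s t k (w : 'I_k -> R) (p : 'I_k -> 'rV[R]_(s + t)) :
  rsubmx (\sum_i w i *: p i) = \sum_i w i *: rsubmx (p i).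
Proof.
apply/matrixP => x y; rewrite !mxE !summxE; apply: eq_bigr => i _; by rewrite !mxE.
Qed.

Lemma dseq_sub s t : (dseq a (s + t) <= dseq a s + dseq a t)%N.
Proof.
apply: pdim_leP => k _ [p [pf pD]].
set M := \matrix_(i < k) (p (lift ord0 i) - p ord0).
have rk : \rank M = k by apply/eqP.
have hl : \matrix_(i < k) (lsubmx (p (lift ord0 i)) - lsubmx (p ord0)) = lsubmx M.
  by apply/matrixP => i j; rewrite !mxE.
have hr : \matrix_(i < k) (rsubmx (p (lift ord0 i)) - rsubmx (p ord0)) = rsubmx M.
  by apply/matrixP => i j; rewrite !mxE.
have := rank_rowmx _ _ _ M; rewrite rk => /leq_trans; apply; apply: leq_add.
  apply: pdim_ge; first exact: rank_leq_col.
  rewrite -hl; apply: (extract _ _ _ (fun i => lsubmx (p i))) => w w0 w1.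
  rewrite -lsub_sum; apply: sat_l; exact: pD.
apply: pdim_ge; first exact: rank_leq_col.
rewrite -hr; apply: (extract _ _ _ (fun i => rsubmx (p i))) => w w0 w1.
rewrite -rsub_sum; apply: sat_r; exact: pD.
Qed.

End PartB.
Section PartC.
Variable R : realType.

Lemma sub_iter (d : nat -> nat) :
  (forall s t, d (s + t) <= d s + d t)%N ->
  forall q m r, (d (q * m + r) <= q * d m + d r)%N.
Proof.
move=> Hs; elim=> [|q IH] m r; first by rewrite !mul0n !add0n.
rewrite mulSn -addnA; apply: (leq_trans (Hs _ _)).
rewrite mulSn -addnA leq_add2l; exact: IH.
Qed.

Lemma fek_bound (d : nat -> nat) :
  (forall s t, d (s + t) <= d s + d t)%N -> (forall s, d s <= s)%N ->
  forall m s, (0 < m)%N -> (0 < s)%N ->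
  (d s)%:R / s%:R <= (d m)%:R / m%:R + m%:R / s%:R :> R.
Proof.
move=> Hs Hl m s m0 s0.
have hn : (d s * m <= d m * s + m * m)%N.
  have e := divn_eq s m.
  have h1 := sub_iter d Hs (s %/ m) m (s %% m).
  rewrite -e in h1.
  have h2 := Hl (s %% m)%N; have h3 : (s %% m < m)%N by rewrite ltn_mod.
  have h4 : (s %/ m * m <= s)%N by rewrite leq_trunc_div.
  have h5 : (d s <= s %/ m * d m + m)%N by lia.
  apply: (leq_trans (leq_mul h5 (leqnn m))).
  rewrite mulnDl leq_add2r -mulnA (mulnC (d m)) mulnA mulnC.
  by apply: leq_mul.
have mR : (m%:R : R) != 0 by rewrite pnatr_eq0 -lt0n.
have sR : (s%:R : R) != 0 by rewrite pnatr_eq0 -lt0n.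
have -> : (d s)%:R / s%:R = ((d s * m)%:R) / (m * s)%:R :> R.
  by rewrite !natrM; field; rewrite ?mR ?sR.
have -> : (d m)%:R / m%:R + m%:R / s%:R = ((d m * s + m * m)%:R) / (m * s)%:R :> R.
  by rewrite natrD !natrM; field; rewrite ?mR ?sR.
rewrite ler_pM2r ?invr_gt0 ?ltr0n ?muln_gt0 ?m0 ?s0 // ler_nat; exact: hn.
Qed.

Lemma fekete (d : nat -> nat) :
  (forall s t, d (s + t) <= d s + d t)%N -> (forall s, d s <= s)%N ->
  exists L : R, ((fun s : nat => ((d s)%:R / s%:R : R)) @ \oo --> L) /\
    forall m, (0 < m)%N -> L <= (d m)%:R / m%:R.
Proof.
move=> Hs Hl.
pose E := [set x : R | exists2 m, (0 < m)%N & x = (d m)%:R / m%:R].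
have El : has_lbound E.
  exists 0 => x [m _ ->]; by rewrite divr_ge0.
have En : E !=set0 by exists ((d 1%N)%:R / 1%:R); exists 1%N.
have Lm : forall m, (0 < m)%N -> inf E <= (d m)%:R / m%:R.
  by move=> m m0; apply: ge_inf => //; exists m.
exists (inf E); split => //.
apply/cvgrPdist_le => e e0.
have e20 : 0 < e / 2 by rewrite divr_gt0.
have [x [m m0 ->] hm] := inf_adherent e20 (conj En El).
pose N := (Num.truncn (2 * m%:R / e)).+1.
exists N; first by [].
move=> s /= hs.
have s0 : (0 < s)%N by apply: leq_trans hs.
have h1 := Lm s s0.
have h2 := fek_bound d Hs Hl m s m0 s0.
have h3 : (m%:R : R) / s%:R <= e / 2.
  have hN := truncnS_gt (2 * m%:R / e : R).
  have hsN : (N%:R : R) <= s%:R by rewrite ler_nat.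
  have sR : (0 : R) < s%:R by rewrite ltr0n.
  have h : 2 * m%:R < s%:R * e.
    rewrite -ltr_pdivrMr //; apply: lt_le_trans hN _.
    by apply: le_trans hsN; rewrite ler_nat.
  rewrite ler_pdivrMr //; nra.
rewrite distrC ger0_norm ?subr_ge0 //.
lra.

Qed.
End PartC.
Definition hh {R : realType} {s : nat} (z : 'rV[R]_s) (x y : nat) : R := zc z x - zc z y.

Section PartD1.
Variable R : realType.
Variables (n : nat) (a : 'I_n.+1 -> R).

Lemma hh_lin s k (w : 'I_k -> R) (p : 'I_k -> 'rV[R]_s) x y :
  hh (\sum_i w i *: p i) x y = \sum_i w i * hh (p i) x y.
Proof.
rewrite /hh !zc_lin -sumrB; apply: eq_bigr => i _; by rewrite mulrBr.
Qed.

Lemma sum_delta k (f : 'I_k -> R) (l : 'I_k) :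
  \sum_(l' < k) f l' * ((l.+1 == l'.+1)%:R) = f l.
Proof.
rewrite (bigD1 l) //= eqxx mulr1 big1 ?addr0 // => l' hl'.
rewrite eqSS; case: eqP => [/val_inj e|]; last by rewrite mulr0.
by rewrite e eqxx in hl'.
Qed.

Lemma window_pair s k (p : 'I_k.+1 -> 'rV[R]_s) k0 :
  (k0 + n < s)%N ->
  (forall w : 'I_k.+1 -> R, (forall i, 0 <= w i) -> \sum_i w i = 1 ->
      satisfies a (\sum_i w i *: p i)) ->
  exists i j : 'I_n.+1, i != j /\ forall l : 'I_k,
     hh (p (lift ord0 l)) (k0 + i) (k0 + j) = hh (p ord0) (k0 + i) (k0 + j).
Proof.
move=> hk HD.
pose c : R := (k.+1%:R)^-1.
have c0 : 0 < c by rewrite invr_gt0 ltr0n.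
pose H (i : 'I_k.+1) (pr : 'I_n.+1 * 'I_n.+1) := hh (p i) (k0 + pr.1) (k0 + pr.2).
pose P (pr : 'I_n.+1 * 'I_n.+1) : {poly R} :=
  (a pr.1 - a pr.2 + H ord0 pr)%:P +
  \sum_(l < k) (c * (H (lift ord0 l) pr - H ord0 pr)) *: 'X^(l.+1).
pose Q := \prod_(pr : 'I_n.+1 * 'I_n.+1 | pr.1 != pr.2) P pr.
have HQ : forall t, 0 <= t -> t <= 1 -> Q.[t] = 0.
  move=> t t0 t1.
  pose S := \sum_(l < k) c * t ^+ l.+1.
  pose wt (i : 'I_k.+1) := if unlift ord0 i is Some l then c * t ^+ l.+1 else 1 - S.
  have S1 : S <= 1.
    apply: (@le_trans _ _ (\sum_(l < k) c)).
      apply: ler_sum => l _; rewrite -[X in _ <= X]mulr1.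
      by apply: ler_wpM2l; [exact: ltW | exact: exprn_ile1].
    rewrite sumr_const card_ord -mulr_natr /c ler_pdivrMl ?ltr0n // mulr1 ler_nat.
    exact: leqnSn.
  have w0 : forall i, 0 <= wt i.
    move=> i; rewrite /wt; case: (unlift _ _) => [l|].
      by apply: mulr_ge0; [exact: ltW | exact: exprn_ge0].
    by rewrite subr_ge0.
  have w1 : \sum_i wt i = 1.
    rewrite big_ord_recl /wt unlift_none.
    under eq_bigr do rewrite liftK.
    by rewrite subrK.
  have [i [j [ij Hl]]] := HD wt w0 w1 k0 hk.
  set z := \sum_i wt i *: p i in Hl.
  have eqij : a i + zc z (k0 + i) = a j + zc z (k0 + j).
    by apply/le_anti; rewrite (Hl j).1 (Hl i).2.
  have Pij : (P (i, j)).[t] = 0.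
    rewrite hornerD hornerC horner_sum /=.
    have hz : H ord0 (i, j) + \sum_(l < k) (c * (H (lift ord0 l) (i, j) - H ord0 (i, j)) *: 'X^(l.+1)).[t]
       = hh z (k0 + i) (k0 + j).
      rewrite /z hh_lin big_ord_recl /wt unlift_none.
      under [in RHS]eq_bigr do rewrite liftK.
      have e2 : \sum_(l < k) ((c * (H (lift ord0 l) (i, j) - H ord0 (i, j))) *: 'X^(l.+1)).[t]
         = \sum_(l < k) c * (H (lift ord0 l) (i, j) - H ord0 (i, j)) * t ^+ l.+1.
        by apply: eq_bigr => l _; rewrite hornerZ hornerXn.
      rewrite e2.
      have -> : \sum_(l < k) c * (H (lift ord0 l) (i, j) - H ord0 (i, j)) * t ^+ l.+1 =
         \sum_(l < k) c * t ^+ l.+1 * H (lift ord0 l) (i, j) - S * H ord0 (i, j).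
        rewrite /S mulr_suml -sumrB; apply: eq_bigr => l _.
        ring.
      rewrite /H /=; ring.
    rewrite -addrA hz /hh; lra.
  rewrite horner_prod (bigD1 (i, j)) //= Pij mul0r //.
have Q0 : Q = 0.
  apply/eqP; apply/negPn/negP => hQ.
  pose rs := [seq ((m.+1)%:R : R)^-1 | m <- iota 0 (size Q)].
  have hall : all (root Q) rs.
    apply/allP => x /mapP [m _ ->]; apply/rootP; apply: HQ.
      by rewrite invr_ge0 ler0n.
    by rewrite invf_le1 ?ltr0n // ler1n.
  have hu : uniq rs.
    rewrite map_inj_uniq ?iota_uniq // => x y /invr_inj /eqP.
    by rewrite eqr_nat eqSS => /eqP.
  by have := max_poly_roots hQ hall hu; rewrite size_map size_iota ltnn.
have : Q == 0 by rewrite Q0.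
case/prodf_eq0 => -[i j] /= ij /eqP Pij.
exists i, j; split => // l.
have := congr1 (fun q : {poly R} => q`_(l.+1)) Pij.
rewrite coef0 coefD coefC /= add0r coef_sum.
under eq_bigr do rewrite coefZ coefXn.
rewrite sum_delta => /eqP; rewrite mulf_eq0 (negbTE (lt0r_neq0 c0)) /= subr_eq0.
by move/eqP.
Qed.
End PartD1.
Section PartD2.
Variable R : realType.
Variables (n : nat) (a : 'I_n.+1 -> R).

Lemma sum_ind s (z : 'rV[R]_s) x :
  \sum_(c < s) z 0 c * (((c : nat) == x)%:R) = zc z x.
Proof.
case: (ltnP x s) => h.
  rewrite (zcE _ _ _ _ h) (bigD1 (Ordinal h)) //= eqxx mulr1 big1 ?addr0 // => c hc.
  case: eqP => e; last by rewrite mulr0.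
  by move: hc; rewrite (_ : c = Ordinal h) ?eqxx //; apply: val_inj.
rewrite zc_out // big1 // => c _; have := ltn_ord c => hc.
by rewrite (_ : (c : nat) == x = false) ?mulr0 //; apply/eqP; lia.
Qed.

Lemma dseq_upper N : (dseq a (N * n + 1) <= N * n + 1 - N)%N.
Proof.
apply: pdim_leP => k _ [p [pf pD]].
have Hw : forall w : 'I_N, exists pr : 'I_n.+1 * 'I_n.+1, pr.1 != pr.2 /\
   forall l : 'I_k, hh (p (lift ord0 l)) (w * n + pr.1) (w * n + pr.2)
                  = hh (p ord0) (w * n + pr.1) (w * n + pr.2).
  move=> w; have hk : (w * n + n < N * n + 1)%N.
    have : (w.+1 * n <= N * n)%N by rewrite leq_mul2r ltn_ord orbT.
    rewrite mulSn; lia.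
  have [i [j [ij Hij]]] := @window_pair R n a _ _ p _ hk pD.
  by exists (i, j).
case: (boolp.choice Hw) => f Hf.
pose L (w : 'I_N) := (w * n + maxn (f w).1 (f w).2)%N.
pose G : 'M[R]_(N, N * n + 1) := \matrix_(w < N, c < N * n + 1)
   (((c : nat) == (w * n + (f w).1)%N)%:R - ((c : nat) == (w * n + (f w).2)%N)%:R).
set M := \matrix_(i < k) (p (lift ord0 i) - p ord0).
have MG : M *m G^T = 0.
  apply/matrixP => l w; rewrite !mxE.
  under eq_bigr do rewrite !mxE.
  under eq_bigr do rewrite mulrBl !mulrBr.
  rewrite !sumrB !sum_ind.
  by move: ((Hf w).2 l); rewrite /hh => ->; rewrite subrr.
have Gf : row_free G.
  apply/inj_row_free => v vG.
  suff H : forall m (w : 'I_N), (N - m <= w)%N -> v 0 w = 0.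
    by apply/rowP => w; rewrite mxE; apply: (H N); rewrite subnn.
  elim=> [|m IH] w hw.
    by have := ltn_ord w; lia.
  case: (leqP (N - m) w) => h; first exact: IH.
  have hne : forall w' : 'I_N, ((f w').1 : nat) != (f w').2.
    by move=> w'; have := (Hf w').1.
  have hb : forall w' : 'I_N, ((f w').1 < n.+1)%N /\ ((f w').2 < n.+1)%N.
    by move=> w'; split; apply: ltn_ord.
  have hL : (L w < N * n + 1)%N.
    have : (w.+1 * n <= N * n)%N by rewrite leq_mul2r ltn_ord orbT.
    have := hb w; rewrite /L mulSn; lia.
  have := congr1 (fun X : 'rV_(N * n + 1) => X 0 (Ordinal hL)) vG.
  rewrite !mxE (bigD1 w) //= big1 ?addr0.
    move/eqP; rewrite mulf_eq0 => /orP [/eqP //|].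
    rewrite !mxE /= /L.
    have := hne w; have := hb w => -[hx hy] hxy0.
    case: (@eqP _ (w * n + maxn (f w).1 (f w).2)%N (w * n + (f w).1)%N) => e1;
    case: (@eqP _ (w * n + maxn (f w).1 (f w).2)%N (w * n + (f w).2)%N) => e2.
    - by exfalso; lia.
    - by rewrite subr0 oner_eq0.
    - by rewrite sub0r oppr_eq0 oner_eq0.
    - by exfalso; lia.
  move=> w' hw'.
  case: (ltnP w w') => hlt.
    by rewrite IH ?mul0r //; lia.
  have hlt' : (w' < w)%N by rewrite ltn_neqAle hlt andbT; apply: contra hw' => /eqP e; apply/eqP/val_inj.
  have : (w'.+1 * n <= w * n)%N by rewrite leq_mul2r hlt' orbT.
  rewrite mulSn => hmul.
  have := hb w'; have := hne w; have := hne w'.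
  rewrite !mxE /= /L => h1 h2 h3.
  rewrite (_ : (_ == _) = false); last by apply/eqP; lia.
  rewrite (_ : (_ == _) = false); last by apply/eqP; lia.
  by rewrite subrr mulr0.
have hsub : (M <= kermx G^T)%MS by apply/sub_kermxP.
have := mxrankS hsub; rewrite mxrank_ker mxrank_tr (eqP Gf) (eqP pf) //.
Qed.
End PartD2.
Theorem proposition3 (R : realType) (n : nat) (a : 'I_n.+1 -> R) :
  (1 <= n)%N ->
  exists H : R,
    ((fun s : nat => ((dseq a s)%:R / s%:R : R)) @ \oo --> H) /\
    H <= 1 - (n%:R)^-1.
Proof.
move=> n1.
have Hs : forall s t, (dseq a (s + t) <= dseq a s + dseq a t)%N.
  by move=> s t; apply: dseq_sub.
have Hl : forall s, (dseq a s <= s)%N by move=> s; apply: pdim_le_s.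
have [L [HL Lm]] := fekete R (dseq a) Hs Hl.
exists L; split => //.
apply/ler_addgt0Pr => e e0.
pose N := (Num.truncn e^-1).+1.
have hN : e^-1 < N%:R by apply: truncnS_gt.
have m0 : (0 < N * n + 1)%N by rewrite addn1.
have h0 := Lm _ m0.
have hd := dseq_upper R n a N.
have hNm : (N <= N * n + 1)%N.
  by apply: leq_trans (leq_addr _ _); rewrite leq_pmulr.
have x1 : (1 : R) <= n%:R by rewrite ler1n.
have y1 : (1 : R) <= N%:R by rewrite ler1n.
set x : R := n%:R in x1 *.
set y : R := N%:R in y1 hN.
have mR : ((N * n + 1)%N%:R : R) = y * x + 1 by rewrite natrD natrM.
have h1 : L * (y * x + 1) <= y * x + 1 - y.
  rewrite -mR -ler_pdivlMr ?ltr0n //; apply: le_trans h0 _.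
  rewrite ler_pM2r ?invr_gt0 ?ltr0n // -natrB // ler_nat //.
have hy : 1 < e * y by rewrite -{1}(mulfV (lt0r_neq0 e0)) ltr_pM2l.
have x0 : 0 < x by apply: lt_le_trans x1.
have -> : 1 - x^-1 + e = (x - 1 + e * x) / x.
  by rewrite mulrDl mulrBl mulfV ?lt0r_neq0 // div1r mulfK ?lt0r_neq0.
rewrite ler_pdivlMr //.
have yx0 : 0 < y * x + 1 by rewrite ltr_wpDl ?mulr_ge0 ?ltW //; apply: lt_le_trans y1.
rewrite -(ler_pM2r yx0).
have A : L * x * (y * x + 1) <= x * (y * x + 1 - y).
  by rewrite mulrAC (mulrC x) ler_pM2r.
have xx : 1 <= x * x by nra.
have B : 1 <= e * y * (x * x) by nra.
have C : 0 <= e * x by rewrite mulr_ge0 ?ltW.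
nra.
Qed.
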